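(* Let $\mathcal{A}=\{0,1\}$ and $\mathcal{F}=\{(0,0,0),(1,1,1)\}$, where $(a,b,c)$ denotes the $2$-block $u$ with $u_\epsilon=a$, $u_0=b$, $u_1=c$. Then $\mathsf{X}_{\mathcal{F}}$ is strongly irreducible with complete prefix code $P=\{0,10,11\}$, and it is not uniformly block gluing.
   Context: $\Sigma=\{0,1\}$. $\Sigma^*$ is the set of finite words, with $\epsilon$ the empty word. $\Sigma^k$ is the set of words of length $k$, and $\Sigma_n=\bigcup_{0\le k\le n}\Sigma^k$. A tree is $t:\Sigma^*\to\mathcal{A}$, and we write $t_x=t(x)$. A pattern $u$ is a map on a finite prefix-closed support $S(u)$. $\mathsf{X}_{\mathcal{F}}$ is the set of trees in which no pattern of $\mathcal{F}$ occurs at any node; here it is the set of trees $t$ such that for no $x$ do $t_x=t_{x0}=t_{x1}$ hold. A pattern is accepted by $X$ if it occurs in some $t\in X$. $B_n(X)=\{t|_{\Sigma_{n-1}}:t\in X\}$. For $w\in\Sigma^*$, $t|_{wS(v)}=v$ means $t_{wy}=v_y$ for all $y\in S(v)$. A leaf of $u$ is $w\in S(u)$ with $w0,w1\notin S(u)$. A complete prefix code (CPC) is a finite set $P\subseteq\Sigma^*\setminus\{\epsilon\}$ such that no word of $P$ is a prefix of another, and every $x$ with $|x|\ge\max_{y\in P}|y|$ has a prefix in $P$. Patterns $u,v$ are connected through $P$ if there is $t\in X$ with $t|_{S(u)}=u$ and $t|_{wxS(v)}=v$ for every leaf $w$ of $u$ and every $x\in P$. $X$ is strongly irreducible with CPC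 $P$ if any two patterns accepted by $X$ are connected through $P$. $X$ is uniformly block gluing if there is $k\ge1$ such that for every $n\ge1$ any $u,v\in B_n(X)$ are connected through $\Sigma^k$. *)

(* Defs.v *)
(* Words over Sigma={0,1} are seq bool with 0 = false, 1 = true. *)
From mathcomp Require Import all_boot.
Set Implicit Arguments. Unset Strict Implicit. Unset Printing Implicit Defensive.

Definition word := seq bool.
Definition tree := word -> bool.
Definition tshift := tree -> Prop.

(* A pattern: a finite support S (listed) together with values u (only
   the values on S matter). *)
Definition prefix_closed (S : seq word) : Prop :=
  forall x, x \in S -> forall p, prefix p x -> p \in S.

Definition XF : tshift := fun t =>
  forall x : word, ~ (t x = t (rcons x false) /\ t x = t (rcons x true)).

Definition occurs_at (t : tree) (w : word) (S : seq word) (u : word -> bool) : Prop :=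
  forall y, y \in S -> t (w ++ y) = u y.

Definition accepted (X : tshift) (S : seq word) (u : word -> bool) : Prop :=
  prefix_closed S /\ exists t, X t /\ exists w, occurs_at t w S u.

Definition leaf (S : seq word) (w : word) : Prop :=
  w \in S /\ rcons w false \notin S /\ rcons w true \notin S.

Definition connected (X : tshift) (Su : seq word) (u : word -> bool)
  (Sv : seq word) (v : word -> bool) (P : seq word) : Prop :=
  exists t, X t /\ occurs_at t [::] Su u /\
    forall w, leaf Su w -> forall x, x \in P -> occurs_at t (w ++ x) Sv v.

Definition is_CPC (P : seq word) : Prop :=
  [::] \notin P /\
  (forall x y, x \in P -> y \in P -> x != y -> ~~ prefix x y) /\
  (forall x : word, \max_(y <- P) size y <= size x ->
     exists2 p, p \in P & prefix p x).

Definition strongly_irreducible (X : tshift) (P : seq word) : Prop :=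
  is_CPC P /\
  forall Su u Sv v, accepted X Su u -> accepted X Sv v ->
    connected X Su u Sv v P.

Fixpoint words (k : nat) : seq word :=
  if k is k'.+1 then [seq b :: w | b <- [:: false; true], w <- words k']
  else [:: [::]].
Definition Sigma_upto (n : nat) : seq word := flatten [seq words k | k <- iota 0 n.+1].

Definition in_B (X : tshift) (n : nat) (u : word -> bool) : Prop :=
  exists t, X t /\ occurs_at t [::] (Sigma_upto n.-1) u.

Definition uniformly_block_gluing (X : tshift) : Prop :=
  exists k, 1 <= k /\ forall n, 1 <= n -> forall u v,
    in_B X n u -> in_B X n v ->
    connected X (Sigma_upto n.-1) u (Sigma_upto n.-1) v (words k).

(* Main.v *)
Require Import Defs.
From mathcomp Require Import all_boot zify.
Set Implicit Arguments. Unset Strict Implicit.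

Definition leafb (Su : seq word) (w : word) : bool :=
  [&& w \in Su, rcons w false \notin Su & rcons w true \notin Su].

Definition cands (Su : seq word) (z : word) : seq word :=
  [seq w <- Su | leafb Su w && prefix w z && (size w < size z)].

Definition gv (sv : tree) (wv : word) (r : word) : bool :=
  match r with
  | false :: y => sv (wv ++ y)
  | [:: true] => ~~ sv wv
  | true :: _ :: y => sv (wv ++ y)
  | [::] => false
  end.

Definition glue (Su : seq word) (su : tree) (wu : word) (sv : tree) (wv : word) : tree :=
  fun z => match cands Su z with
           | w :: _ => gv sv wv (drop (size w) z)
           | [::] => su (wu ++ z)
           end.

Lemma no_strict Su w1 w2 : prefix_closed Su -> leafb Su w1 -> w2 \in Su ->
  prefix w1 w2 -> size w1 < size w2 -> False.
Proof.
move=> pc /and3P[_ n0 n1] w2S /prefixP[s E]; subst w2.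
case: s w2S => [|c s] w2S; first by rewrite cats0 ltnn.
move=> _.
have : prefix (rcons w1 c) (w1 ++ c :: s) by apply/prefixP; exists s; rewrite cat_rcons.
move/(pc _ w2S) => H.
by case: c {w2S} H => H; [move/negP: n1 | move/negP: n0].
Qed.

Lemma prefix_cmp (a b z : word) : prefix a z -> prefix b z -> size a <= size b ->
  prefix a b.
Proof.
rewrite !prefixE => /eqP ha /eqP hb hs.
by rewrite -hb take_takel // ha.
Qed.

Lemma prefix_eqsize (a b z : word) : prefix a z -> prefix b z -> size a = size b -> a = b.
Proof. by rewrite !prefixE => /eqP ha /eqP hb hs; rewrite -ha -hb hs. Qed.

Lemma cands_uniq Su z w1 w2 : prefix_closed Su -> w1 \in cands Su z -> w2 \in cands Su z ->
  w1 = w2.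
Proof.
move=> pc; rewrite !mem_filter => /andP[/andP[/andP[l1 p1] _] i1] /andP[/andP[/andP[l2 p2] _] i2].
case: (ltngtP (size w1) (size w2)) => h.
- by exfalso; apply: (no_strict pc l1 i2 (prefix_cmp p1 p2 (ltnW h)) h).
- by exfalso; apply: (no_strict pc l2 i1 (prefix_cmp p2 p1 (ltnW h)) h).
- exact: prefix_eqsize p1 p2 h.
Qed.

Lemma cands_head Su z w l : prefix_closed Su -> cands Su z = w :: l ->
  forall w', w' \in cands Su z -> w' = w.
Proof. by move=> pc e w' hw'; apply: (cands_uniq pc hw'); rewrite e mem_head. Qed.

Lemma cands_in Su y : prefix_closed Su -> y \in Su -> cands Su y = [::].
Proof.
move=> pc yS; apply/eqP; rewrite -[_ == _]negbK -has_filter; apply/hasPn => w wS.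
apply/negP => /andP[/andP[lw pw] sw]; exact: (no_strict pc lw yS pw sw).
Qed.

Lemma prefix_rcons_le (p z : word) c : prefix p (rcons z c) -> size p <= size z -> prefix p z.
Proof. by rewrite !prefixE -cats1 => /eqP h hs; rewrite -{2}h takel_cat. Qed.

Lemma prefix_rconsW (p z : word) c : prefix p z -> prefix p (rcons z c).
Proof. by move/prefixP=> [s ->]; apply/prefixP; exists (rcons s c); rewrite rcons_cat. Qed.

Lemma glue_XF Su su wu sv wv : prefix_closed Su -> XF su -> XF sv -> XF (glue Su su wu sv wv).
Proof.
move=> pc Hsu Hsv z.
rewrite /glue.
case E: (cands Su z) => [|w l].
- case L: (leafb Su z).
  + have Hc : forall c, exists l', cands Su (rcons z c) = z :: l'.
      move=> c.
      have hz : z \in cands Su (rcons z c).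
        by rewrite mem_filter L prefix_rconsW ?prefix_refl //= size_rcons ltnSn; case/and3P: L.
      case E2: (cands Su (rcons z c)) => [|w' l'].
        by move: hz; rewrite E2.
      by exists l'; rewrite -(cands_head pc E2 hz).
    case: (Hc false) => l0 ->; case: (Hc true) => l1 ->.
    rewrite -!cats1 !drop_size_cat // /= cats0.
    by move=> [-> ]; case: (sv wv).
  + have Hc : forall c, cands Su (rcons z c) = [::].
      move=> c; apply/eqP; rewrite -[_ == _]negbK -has_filter; apply/hasPn => w wS.
      apply/negP => /andP[/andP[lw pw] sw].
      rewrite size_rcons ltnS leq_eqVlt in sw; case/orP: sw => sw.
      * have pwz := prefix_rcons_le pw (eq_leq (eqP sw)).
        have ewz := prefix_eqsize pwz (prefix_refl z) (eqP sw).
        by move: lw; rewrite ewz L.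
      * have : w \in cands Su z by rewrite mem_filter lw (prefix_rcons_le pw (ltnW sw)) sw.
        by rewrite E.
    by rewrite !Hc -!rcons_cat; apply: Hsu.
- have hw : w \in cands Su z by rewrite E mem_head.
  move: (hw); rewrite mem_filter => /andP[/andP[/andP[lw pw] sw] wS].
  have nL : ~~ leafb Su z.
    apply/negP => Lz; case/and3P: (Lz) => zS _ _; exact: (no_strict pc lw zS pw sw).
  have Hc : forall c, cands Su (rcons z c) = cands Su z.
    move=> c; rewrite /cands; apply: eq_in_filter => w' _.
    apply/idP/idP.
    + move=> /andP[/andP[lw' pw'] sw']; rewrite size_rcons ltnS leq_eqVlt in sw'.
      case/orP: sw' => sw'.
      * have pwz := prefix_rcons_le pw' (eq_leq (eqP sw')).
        have ewz := prefix_eqsize pwz (prefix_refl z) (eqP sw').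
        by move: lw'; rewrite ewz (negbTE nL).
      * by rewrite lw' (prefix_rcons_le pw' (ltnW sw')) sw'.
    + move=> /andP[/andP[lw' pw'] sw'].
      by rewrite lw' prefix_rconsW // size_rcons ltnS ltnW.
  rewrite !Hc E !drop_rcons ?(ltnW sw) //.
  have Hr : 0 < size (drop (size w) z) by rewrite size_drop subn_gt0.
  case: (drop (size w) z) Hr => [|b y] Hr //; case: b {Hr}; last first.
    by rewrite /= -!rcons_cat; apply: Hsv.
  case: y => [|d y] /=.
    rewrite cats0 => -[]; by case: (sv wv).
  by rewrite -!rcons_cat; apply: Hsv.
Qed.

Lemma words_mem k (x : word) : size x = k -> x \in words k.
Proof.
elim: k x => [|k IH] [|b x] //= [e].
rewrite mem_cat cats0; case: b; apply/orP; [right|left]; apply: map_f; exact: IH.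
Qed.

Lemma alt_B b : in_B XF 1 (fun _ => b).
Proof.
exists (fun z => b (+) odd (size z)); split.
  by move=> z; rewrite !size_rcons /=; case: b; case: (odd _) => -[].
move=> y; rewrite /Sigma_upto /= inE => /eqP -> /=; exact: addbF.
Qed.

Theorem mainTheorem9 :
  strongly_irreducible XF [:: [:: false]; [:: true; false]; [:: true; true]]
  /\ ~ uniformly_block_gluing XF.
Proof.
split.
  split.
    split; first by [].
    split.
      by move=> x y; rewrite !inE => /or3P[]/eqP-> /or3P[]/eqP->.
    move=> x; rewrite !big_cons big_nil /=.
    case: x => [|a [|b x]] /=; [by []|by []|move=> _].
    case: a; case: b.
    - by apply: (@ex_intro2 _ _ _ [:: true; true]); rewrite ?inE ?prefix0s.
    - by apply: (@ex_intro2 _ _ _ [:: true; false]); rewrite ?inE ?prefix0s.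
    - by apply: (@ex_intro2 _ _ _ [:: false]); rewrite ?inE ?prefix0s.
    - by apply: (@ex_intro2 _ _ _ [:: false]); rewrite ?inE ?prefix0s.
  move=> Su u Sv v [pcu [su [Hsu [wu Ou]]]] [_ [sv [Hsv [wv Ov]]]].
  exists (glue Su su wu sv wv); split; first exact: glue_XF.
  split.
    by move=> y yS; rewrite /glue cands_in //; exact: Ou.
  move=> w [wS [n0 n1]] x xP y yS.
  have Lw : leafb Su w by rewrite /leafb wS n0 n1.
  have hz : w \in cands Su ((w ++ x) ++ y).
    rewrite mem_filter Lw wS /= andbT; apply/andP; split.
      by apply/prefixP; exists (x ++ y); rewrite catA.
    by move: xP; rewrite !inE => /or3P[]/eqP->; rewrite !size_cat /=; lia.
  rewrite /glue; case E2: (cands Su _) => [|w' l]; first by rewrite E2 in hz.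
  rewrite -(cands_head pcu E2 hz) -catA drop_size_cat //.
  by move: xP; rewrite !inE => /or3P[]/eqP-> /=; apply: Ov.
move=> [k [k1 H]].
have [t [Xt [Ot Ov]]] := H 1 isT (fun _ => ~~ odd k) (fun _ => false) (alt_B _) (alt_B _).
have Ov' : forall z, size z = k -> t z = false.
  move=> z sz.
  have := Ov [::] _ z (words_mem sz) [::].
  rewrite cats0 /=; apply => //.
have F : forall m z, size z + m = k -> t z = odd m.
  elim=> [|m IH] z hz; first by apply: Ov'; rewrite -hz addn0.
  have h0 : t (rcons z false) = odd m by apply: IH; rewrite size_rcons addSnnS.
  have h1 : t (rcons z true) = odd m by apply: IH; rewrite size_rcons addSnnS.
  move: (Xt z); rewrite h0 h1 /=.
  by case: (t z); case: (odd m) => // /(_ (conj erefl erefl)).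
have := F k [::] (add0n k).
have := Ot [::] (mem_head _ _).
by rewrite /= => ->; case: (odd k).
Qed.
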